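(* Let $\mathcal{A}=\{d,u\}$. Consider the double comb context tree on $\mathcal{A}$, whose contexts are the words $u^k d$ and $d^k u$ for $k\geq 1$, and for each context $c$ let $q_c$ be a probability measure on $\mathcal{A}$. Let $(U_n)_{n\geq 0}$ be the associated variable length Markov chain (VLMC), started from a right-infinite word $U_0$ with $X_{-1}=u$, $X_0=d$, and for $n\geq 0$ let $X_n$ denote the first (leftmost) letter of $U_n$, so that $U_n=X_nX_{n-1}\cdots X_0X_{-1}\cdots$. Assume that for all $\alpha\neq\beta$ in $\mathcal{A}$, $\lim_{n\to\infty}\prod_{k=1}^{n}q_{\alpha^k\beta}(\alpha)=0$. Define the jump times $B_0=0$ and $B_{n+1}=\inf\{k>B_n : X_k\neq X_{k-1}\}$ for $n\geq 0$, the sojourn times $T_0=0$, $T_n=B_n-B_{n-1}$ for $n\geq 1$, and $J_n=X_{B_n}$ for $n\geq 0$. Then $(J_n,T_n)_{n\geq 0}$ is a Markov renewal chain with state space $\mathcal{A}\times\mathbb{N}$ whose semi-Markov kernel is given, for $\alpha\neq\beta$ in $\mathcal{A}$ and $k\geq 1$, by \[ p_{\alpha,\beta}(k)=\Big(\prod_{j=1}^{k-1}q_{\alpha^j\beta}(\alpha)\Big)\,q_{\alpha^k\beta}(\beta), \] (and $p_{\alpha,\alpha}(k)=0$, $p_{\alpha,\beta}(0)=0$), and the sequence of increments $(X_j)_{j\geq 0}$ is the $\mathcal{A}$-valued semi-Markov chain associated with $(J_n,T_n)_{n\geq0}$, i.e. $X_j=J_n$ whenever $B_n\leq j<B_{n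+1}$.
   Context: A VLMC defined by a context tree $\mathcal{T}$ (a saturated tree of finite words on $\mathcal{A}$ with at most countably many infinite branches; contexts are its leaves and infinite branches) and probability measures $(q_c)_c$ indexed by the contexts is the Markov chain $(U_n)$ on right-infinite words over $\mathcal{A}$ with transitions $\mathbb{P}(U_{n+1}=\alpha U_n\mid U_n)=q_{\mathrm{pref}(U_n)}(\alpha)$, where $\mathrm{pref}(w)$ is the unique context that is a prefix of $w$ (for the double comb, $\mathrm{pref}(w)=\alpha^k\beta$ when $w$ begins with exactly $k$ copies of $\alpha$ followed by $\beta\neq\alpha$). The walk $S_n=\sum_{\ell=1}^n X_\ell$ (with $d=-1$, $u=+1$) is the one-dimensional persistent random walk. A Markov chain $(J_n,T_n)_{n\geq0}$ on $E\times\mathbb{N}$ is a Markov renewal chain if $\mathbb{P}(J_{n+1}=b,T_{n+1}=k\mid J_n=a,T_n=j)=\mathbb{P}(J_{n+1}=b,T_{n+1}=k\mid J_n=a)=:p_{a,b}(k)$ for all $n,a,b,j,k$, with $p_{a,b}(0)=0$; the family $(p_{a,b}(k))$ is its semi-Markov kernel. If $T_0=0$ and $B_n=\sum_{i=0}^nT_i$, the associated semi-Markov chain is $(Z_j)_{j\geq0}$ with $Z_j=J_n$ for $B_n\leq j<B_{n+1}$. *)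

(* Defs.v *)
From HB Require Import structures.
From mathcomp Require Import all_boot all_order all_algebra.
From mathcomp Require Import all_classical all_reals all_analysis.
Set Implicit Arguments. Unset Strict Implicit. Unset Printing Implicit Defensive.
Import Order.TTheory GRing.Theory Num.Theory.

Definition letter := bool.
Definition lu : letter := true.
Definition ld : letter := false.

(* Given a finite history h 0, ..., h n (= X_0, ..., X_n), the extended
   history g with g 0 = X_{-1} = u and g (i+1) = X_i. *)
Definition ext_hist (h : nat -> letter) (i : nat) : letter :=
  match i with 0 => lu | i'.+1 => h i' end.

Fixpoint runlen (g : nat -> letter) (a : letter) (m : nat) : nat :=
  match m with
  | 0 => if g 0 == a then 1 else 0
  | m'.+1 => if g m == a then (runlen g a m').+1 else 0
  end.

(* pref(U_n) for U_n = h n h (n-1) ... h 0 u ... (with h 0 = d):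
   it is the context alpha^k beta with alpha = h n and k = ctx_len h n. *)
Definition ctx_len (h : nat -> letter) (n : nat) : nat :=
  runlen (ext_hist h) (h n) n.+1.

(* The probability measures q_c indexed by contexts c = alpha^k beta
   (k >= 1, beta = ~~ alpha) are encoded as q alpha k : letter -> R. *)

(* jump times:  jump_time x n m  <->  B_n = m (B_0 = 0,
   B_{n+1} = inf {k > B_n | x k <> x (k-1)}) *)
Fixpoint jump_time (x : nat -> letter) (n m : nat) : Prop :=
  match n with
  | 0 => m = 0%N
  | n'.+1 => exists m', jump_time x n' m' /\ (m' < m)%N /\ x m != x m.-1 /\
             (forall k, (m' < k < m)%N -> x k = x k.-1)
  end.

Definition smkernel (R : realType) (q : letter -> nat -> letter -> R)
  (a b : letter) (k : nat) : R :=
  if (a != b) && (0 < k)%N then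
    ((\prod_(1 <= j < k) q a j a) * q a k b)%R
  else 0%R.

(* sum of sojourn times t 0 + ... + t i, i.e. B_i when T_l = t l *)
Definition psum (t : nat -> nat) (i : nat) : nat := \sum_(l < i.+1) t l.

(* event {(J_i, T_i) = (j i, t i) for all i <= n} on the path x *)
Definition MR_event (x : nat -> letter) (n : nat) (j : nat -> letter)
  (t : nat -> nat) : Prop :=
  t 0 = 0%N /\
  forall i, (i <= n)%N -> jump_time x i (psum t i) /\ x (psum t i) = j i.

(* Main.v *)
Require Import Defs.
From HB Require Import structures.
From mathcomp Require Import all_boot all_order all_algebra.
From mathcomp Require Import all_classical all_reals all_analysis.
From mathcomp Require Import zify.
Import Order.TTheory GRing.Theory Num.Theory.
Local Open Scope classical_set_scope.
Local Open Scope ring_scope.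
Set Implicit Arguments.
Unset Strict Implicit.

Lemma runlen_ext (g g' : nat -> letter) a M :
  (forall i, (i <= M)%N -> g i = g' i) -> runlen g a M = runlen g' a M.
Proof.
elim: M => [|M IH] H /=; first by rewrite H.
rewrite H // IH // => i Hi; apply: H; exact: leqW.
Qed.

Lemma ctx_len_ext (h h' : nat -> letter) n :
  (forall i, (i <= n)%N -> h i = h' i) -> ctx_len h n = ctx_len h' n.
Proof.
rewrite /ctx_len => H; rewrite H //; apply: runlen_ext => -[|i] Hi //=.
exact: H.
Qed.

Lemma runlen_run (G : nat -> letter) a N s : G N != a ->
  (forall l, (0 < l <= s)%N -> G (N + l)%N = a) -> runlen G a (N + s) = s.
Proof.
elim: s => [|s IH] HN H.
  by rewrite addn0; case: N HN H => [|N] HN H /=; rewrite (negbTE HN).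
rewrite addnS /= -addnS H ?ltn0Sn ?leqnn // eqxx IH // => l /andP[l0 ls].
by apply: H; rewrite l0 /= ltnW.
Qed.

Lemma ctx_run (g : nat -> letter) N a i : g 0%N = ld ->
  (N = 0%N \/ g N != g N.-1) -> (forall l, (l <= i)%N -> g (N + l)%N = a) ->
  ctx_len g (N + i) = i.+1.
Proof.
move=> g0 HN H; rewrite /ctx_len H // -addnS; apply: runlen_run.
  case: N HN H => [|N] HN H /=.
    by have := H 0%N (leq0n _); rewrite g0 => <-.
  case: HN => // HN; have := H 0%N (leq0n _); rewrite addn0 => <-.
  by rewrite eq_sym.
move=> [|l] // /andP[_ li]; rewrite addnS /=; exact: H.
Qed.

Lemma jt_uniq (x : nat -> letter) n m1 m2 :
  jump_time x n m1 -> jump_time x n m2 -> m1 = m2.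
Proof.
elim: n m1 m2 => [|n IH] m1 m2 /=; first by move=> -> ->.
move=> [p1 [J1 [l1 [c1 f1]]]] [p2 [J2 [l2 [c2 f2]]]].
have E := IH _ _ J1 J2; subst p2.
case: (ltngtP m1 m2) => // h.
- by have := f2 m1; rewrite l1 h => /(_ isT) E; rewrite E eqxx in c1.
- by have := f1 m2; rewrite l2 h => /(_ isT) E; rewrite E eqxx in c2.
Qed.

Lemma jt_ext (x y : nat -> letter) n M :
  (forall l, (l <= M)%N -> x l = y l) -> jump_time x n M -> jump_time y n M.
Proof.
elim: n M => [|n IH] M H //= [p [J [lt [c f]]]].
exists p; split.
  by apply: IH J => l hl; apply: H; apply: leq_trans hl (ltnW lt).
split=> //; split; first by rewrite -!H // leq_pred.
move=> k /andP[a b]; have kM := ltnW b.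
rewrite -!H ?(leq_trans (leq_pred k)) //; apply: f; by rewrite a b.
Qed.

Lemma jt_start (x : nat -> letter) n m :
  jump_time x n m -> m = 0%N \/ x m != x m.-1.
Proof. by case: n => [|n] /= => [->|[p [_ [_ [c _]]]]]; [left|right]. Qed.

Lemma jt_succ (x : nat -> letter) n m m' : jump_time x n m ->
  (jump_time x n.+1 m' <->
   [/\ (m < m')%N, x m' != x m'.-1 & forall k, (m < k < m')%N -> x k = x k.-1]).
Proof.
move=> J; split => /=.
  by move=> [p [Jp [l [c f]]]]; rewrite (jt_uniq J Jp); split.
by move=> [l c f]; exists m.
Qed.

Lemma psumS t i : psum t i.+1 = (psum t i + t i.+1)%N.
Proof. by rewrite /psum big_ord_recr. Qed.

Lemma psum_mono t i n : (i <= n)%N -> (psum t i <= psum t n)%N.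
Proof.
elim: n => [|n IH]; first by rewrite leqn0 => /eqP->.
rewrite leq_eqVlt => /orP[/eqP->//|/IH]; rewrite psumS => h.
exact: leq_trans h (leq_addr _ _).
Qed.

Lemma MR_ext (x y : nat -> letter) n j t :
  (forall l, (l <= psum t n)%N -> x l = y l) -> MR_event x n j t -> MR_event y n j t.
Proof.
move=> H [t0 Hi]; split => // i hi; have [J E] := Hi i hi.
have hm := psum_mono t hi; split.
  by apply: jt_ext J => l hl; apply: H; exact: leq_trans hl hm.
by rewrite -H.
Qed.


Definition cyl (T : Type) (X : nat -> T -> letter) r (g : nat -> letter) :=
  [set w | forall i, (i <= r)%N -> X i w = g i].

Definition trans_hyp (R : realType) dsp (T : measurableType dsp)
  (P : probability T R) (q : letter -> nat -> letter -> R) (X : nat -> T -> letter) :=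
  forall (n : nat) (h : nat -> letter), h 0%N = ld ->
     P (cyl X n.+1 h) = ((q (h n) (ctx_len h n) (h n.+1))%:E * P (cyl X n h))%E.

Lemma cyl_meas dsp (T : measurableType dsp) (X : nat -> T -> letter) :
  (forall n a, measurable [set w | X n w = a]) ->
  forall r g, measurable (cyl X r g).
Proof.
move=> Hm; elim => [|r IH] g.
  have -> : cyl X 0 g = [set w | X 0%N w = g 0%N]; last exact: Hm.
  apply/seteqP; split => w /=; first by move/(_ 0%N (leqnn 0)).
  by move=> H i; rewrite leqn0 => /eqP ->.
have -> : cyl X r.+1 g = cyl X r g `&` [set w | X r.+1 w = g r.+1].
  apply/seteqP; split => w /=.
    by move=> H; split; [move=> i hi; apply: H; exact: leqW|exact: H].
  by move=> [H1 H2] i; rewrite leq_eqVlt => /orP[/eqP->//|]; exact: H1.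
by apply: measurableI => //; exact: Hm.
Qed.

Lemma step_lemma (R : realType) dsp (T : measurableType dsp)
  (P : probability T R) (q : letter -> nat -> letter -> R) (X : nat -> T -> letter) :
  (forall n a, measurable [set w | X n w = a]) ->
  (forall w, X 0%N w = ld) -> trans_hyp P q X ->
  forall m (S : (nat -> letter) -> Prop) b c,
  (forall g g', (forall i, (i <= m)%N -> g i = g' i) -> S g -> S g') ->
  (forall g, g 0%N = ld -> S g -> q (g m) (ctx_len g m) b = c) ->
  measurable [set w | S (fun i => X i w)] /\
  P ([set w | S (fun i => X i w)] `&` [set w | X m.+1 w = b]) =
    (c%:E * P [set w | S (fun i => X i w)])%E.
Proof.
move=> Hm HX0 HT m S b c Sext Sc.
set E := [set w | S _]; set B := [set w | X m.+1 w = b].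
pose F r g := E `&` cyl X r g.
pose Q r g := measurable (F r g) /\ P (F r g `&` B) = (c%:E * P (F r g))%E.
have base : forall g, Q m g.
  move=> g; rewrite /Q; case: (pselect (S g)) => Sg; last first.
    have -> : F m g = set0; last by rewrite set0I measure0 mule0.
    apply/seteqP; split => w //= [Sw Hw]; apply: Sg; apply: Sext Sw => i hi.
    exact: Hw.
  have -> : F m g = cyl X m g.
    apply/seteqP; split => w; first by case.
    move=> Hw; split => //; apply: Sext Sg => i hi; symmetry; exact: Hw.
  split; first exact: cyl_meas.
  case: (boolP (g 0%N == ld)) => [/eqP g0|g0]; last first.
    have -> : cyl X m g = set0; last by rewrite set0I measure0 mule0.
    apply/seteqP; split => w //= Hw; move: g0; rewrite -(Hw 0%N (leq0n _)).
    by rewrite HX0 eqxx.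
  pose h i := if i == m.+1 then b else g i.
  have hg : forall i, (i <= m)%N -> h i = g i.
    by move=> i hi; rewrite /h ifF //; apply/negbTE; rewrite neq_ltn ltnS hi.
  have e1 : cyl X m.+1 h = cyl X m g `&` B.
    apply/seteqP; split => w /=.
      move=> H; split; last by rewrite /B /= H // /h eqxx.
      by move=> i hi; rewrite -hg // H // leqW.
    move=> [H1 H2] i; rewrite leq_eqVlt => /orP[/eqP->|hi].
      by rewrite /h eqxx.
    by rewrite hg // H1.
  have e2 : cyl X m h = cyl X m g.
    by apply/seteqP; split => w /= H i hi; rewrite ?hg // H // hg.
  have h0 : h 0%N = ld by rewrite hg.
  rewrite -e1 HT // e2 hg // (ctx_len_ext (h' := g) hg) /h eqxx.
  by rewrite (Sc g g0 Sg).
have step : forall r g, (forall g, Q r.+1 g) -> Q r g.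
  move=> r g IH.
  pose up (v : letter) i := if i == r.+1 then v else g i.
  have eF : F r g = F r.+1 (up true) `|` F r.+1 (up false).
    apply/seteqP; split => w /=.
      move=> [Sw H]; case Xw : (X r.+1 w); [left|right]; split => //;
        move=> i; rewrite /up; case: eqP => [->//|ne hi]; apply: H;
        by move: hi; rewrite leq_eqVlt => /orP[/eqP Ei|//]; case: ne.
    have hup : forall v i, (i <= r)%N -> up v i = g i.
      by move=> v i hi; rewrite /up ifF //; apply/negbTE; rewrite neq_ltn ltnS hi.
    by move=> [] [Sw H]; split => // i hi; [rewrite -(hup true _ hi)|rewrite -(hup false _ hi)]; rewrite H // leqW.
  have disj : forall A, (F r.+1 (up true) `&` A) `&` (F r.+1 (up false) `&` A) = set0.
    move=> A; apply/seteqP; split => w //= [[[_ H1] _] [[_ H2] _]].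
    by move: (H1 r.+1 (leqnn _)) (H2 r.+1 (leqnn _)); rewrite /up eqxx => ->.
  have [m1 e1] := IH (up true); have [m2 e2] := IH (up false).
  rewrite /Q eF; split; first exact: measurableU.
  have mB : measurable B by exact: Hm.
  rewrite setIUl measureU //; try exact: measurableI.
  rewrite measureU //; last by have := disj setT; rewrite !setIT.
  by rewrite ge0_muleDr // -e1 -e2.
have all : forall d g, Q (m - d)%N g.
  elim => [|d IH] g; first by rewrite subn0.
  case: (ltnP d m) => dm.
    by apply: step; rewrite subnSK.
  have h1 : (m - d.+1 = 0)%N by apply/eqP; rewrite subn_eq0 (leq_trans dm).
  have h2 : (m - d = 0)%N by apply/eqP; rewrite subn_eq0.
  by rewrite h1 -h2; exact: IH.
have [mE eE] := all m (fun _ => ld); rewrite subnn in mE eE.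
have -> : E = F 0%N (fun _ => ld).
  apply/seteqP; split => w /=; last by case.
  by move=> Sw; split => // i; rewrite leqn0 => /eqP ->.
by split.
Qed.


Definition runE (T : Type) (X : nat -> T -> letter) N a
  (S0 : (nat -> letter) -> Prop) i :=
  [set w | S0 (fun l => X l w) /\ forall l, (l <= i)%N -> X (N + l)%N w = a].

Lemma run_lemma (R : realType) dsp (T : measurableType dsp)
  (P : probability T R) (q : letter -> nat -> letter -> R) (X : nat -> T -> letter) :
  (forall n a, measurable [set w | X n w = a]) ->
  (forall w, X 0%N w = ld) -> trans_hyp P q X ->
  forall N a (S0 : (nat -> letter) -> Prop),
  (forall g g', (forall i, (i <= N)%N -> g i = g' i) -> S0 g -> S0 g') ->
  (forall g, S0 g -> g 0%N = ld -> (N = 0%N \/ g N != g N.-1) /\ g N = a) ->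
  forall i,
  [/\ measurable (runE X N a S0 i),
      P (runE X N a S0 i) =
        ((\prod_(1 <= l < i.+1) q a l a)%:E * P [set w | S0 (fun l => X l w)])%E
    & forall b, P (runE X N a S0 i `&` [set w | X (N + i).+1 w = b]) =
        ((q a i.+1 b)%:E * P (runE X N a S0 i))%E].
Proof.
move=> Hm HX0 HT N a S0 ext H0.
have St : forall i b, measurable (runE X N a S0 i) /\
    P (runE X N a S0 i `&` [set w | X (N + i).+1 w = b]) =
        ((q a i.+1 b)%:E * P (runE X N a S0 i))%E.
  move=> i b.
  apply: (step_lemma Hm HX0 HT (S := fun g => S0 g /\ forall l, (l <= i)%N -> g (N + l)%N = a)).
    move=> g g' E [Sg Hg]; split.
      by apply: ext Sg => l hl; apply: E; exact: leq_trans hl (leq_addr _ _).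
    by move=> l hl; rewrite -E ?leq_add2l // Hg.
  move=> g g0 [Sg Hg]; rewrite Hg // (@ctx_run g N a i) //; by case: (H0 g Sg g0).
have E0 : runE X N a S0 0 = [set w | S0 (fun l => X l w)].
  apply/seteqP; split => w /=; first by case.
  move=> Sw; split => // l; rewrite leqn0 => /eqP ->; rewrite addn0.
  by case: (H0 _ Sw (HX0 w)).
elim => [|i IH].
  have [m e] := St 0%N a.
  split => //; first by rewrite E0 big_geq // mul1e.
  exact: (fun b => (St 0%N b).2).
split; first exact: (St i.+1 a).1.
  have -> : runE X N a S0 i.+1 = runE X N a S0 i `&` [set w | X (N + i).+1 w = a].
    apply/seteqP; split => w /=.
      by move=> [Sw Hw]; split; [split => // l hl; apply: Hw; exact: leqW|rewrite -addnS Hw].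
    move=> [[Sw Hw] Hl]; split => // l; rewrite leq_eqVlt => /orP[/eqP->|hl].
      by rewrite addnS.
    exact: Hw.
  have [_ e2 _] := IH.
  rewrite (St i a).2 e2 [in RHS]big_nat_recr //= muleA -EFinM mulrC.
  done.
exact: (fun b => (St i.+1 b).2).
Qed.


Lemma jt_const (x : nat -> letter) n m m' i :
  jump_time x n m -> jump_time x n.+1 m' -> (m <= i < m')%N -> x i = x m.
Proof.
move=> J /(jt_succ _ J) [lt c f].
elim: i => [|i IH] /andP[h1 h2]; first by move: h1; rewrite leqn0 => /eqP ->.
case: (ltngtP m i.+1) h1 => // h _; last by rewrite h.
rewrite f; last by rewrite h h2.
by apply: IH; rewrite -ltnS h (ltn_trans _ h2).
Qed.

Lemma MR_succ (x : nat -> letter) n j t :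
  MR_event x n.+1 j t <-> MR_event x n j t /\
    jump_time x n.+1 (psum t n + t n.+1)%N /\ x (psum t n + t n.+1)%N = j n.+1.
Proof.
split.
  move=> [t0 H]; split; first by split => // i hi; apply: H; exact: leqW.
  by rewrite -psumS; exact: H n.+1 (leqnn _).
move=> [[t0 H] [J E]]; split => // i; rewrite leq_eqVlt => /orP[/eqP->|hi].
  by rewrite psumS.
exact: H.
Qed.

Lemma part2 (R : realType) dsp (T : measurableType dsp)
  (P : probability T R) (q : letter -> nat -> letter -> R) (X : nat -> T -> letter) :
  (forall n a, measurable [set w | X n w = a]) ->
  (forall w, X 0%N w = ld) -> trans_hyp P q X ->
  forall (n : nat) (j : nat -> letter) (t : nat -> nat),
      P [set w | MR_event (fun i => X i w) n.+1 j t] =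
      ((smkernel q (j n) (j n.+1) (t n.+1))%:E *
       P [set w | MR_event (fun i => X i w) n j t])%E.
Proof.
move=> Hm HX0 HT n j t.
set N := psum t n; set a := j n; set b := j n.+1.
rewrite /smkernel; case: ifPn => [/andP[ab]|H0].
  case Ek: (t n.+1) => [//|i] _.
  pose S0 := fun g => MR_event g n j t.
  have ext : forall g g', (forall i, (i <= N)%N -> g i = g' i) -> S0 g -> S0 g'.
    by move=> g g' E; apply: MR_ext.
  have H0 : forall g, S0 g -> g 0%N = ld -> (N = 0%N \/ g N != g N.-1) /\ g N = a.
    move=> g [t0 Hg] _; have [J E] := Hg n (leqnn _); split => //.
    exact: jt_start J.
  have [_ e1 e2] := run_lemma Hm HX0 HT ext H0 i.
  have -> : [set w | MR_event (fun i => X i w) n.+1 j t] =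
      runE X N a S0 i `&` [set w | X (N + i).+1 w = b].
    apply/seteqP; split => w /=.
      move=> /MR_succ [Mw [J' E']]; rewrite Ek in J' E'.
      have [_ /(_ n (leqnn _)) [J _]] := Mw.
      split; last by rewrite -addnS.
      split => // l hl; rewrite (jt_const J J'); first by case: Mw => _ /(_ n (leqnn _)) [].
      by apply/andP; split; lia.
    move=> [[Mw Hl] Xb]; apply/MR_succ; split => //.
    have [_ /(_ n (leqnn _)) [J XN]] := Mw.
    rewrite Ek; split; last by rewrite addnS.
    apply/(jt_succ _ J); split.
    - lia.
    - by rewrite addnS /= Xb Hl // eq_sym.
    - move=> k /andP[k1 k2].
      have -> : X k w = a by rewrite (_ : k = N + (k - N))%N; [apply: Hl; lia|lia].
      by rewrite (_ : k.-1 = N + (k.-1 - N))%N; [rewrite Hl //; lia|lia].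
  rewrite e2 e1 muleA -EFinM.
  by congr (_ * _)%E; congr (_%:E); rewrite mulrC.
rewrite mul0e.
have -> : [set w | MR_event (fun i => X i w) n.+1 j t] = set0; last exact: measure0.
apply/seteqP; split => w //= /MR_succ [Mw [J' E']].
have [_ /(_ n (leqnn _)) [J XN]] := Mw.
have [lt c f] := (jt_succ _ J).1 J'.
move: H0; rewrite negb_and negbK -leqNgt => /orP[/eqP ab|]; last by lia.
have E1 : X (N + t n.+1).-1 w = X N w.
  by apply: (jt_const J J'); apply/andP; split; lia.
move: c XN E' => /= c XN E'.
rewrite E1 E' XN in c; by move: c ab; rewrite /a /b => c ab; rewrite ab eqxx in c.
Qed.


Module LimAux.
Import numFieldNormedType.Exports.
Lemma lim0_le (R : realType) (u : nat -> R) (z : R) :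
  (fun n => u n) @ \oo --> 0 -> (forall i, z <= u i) -> z <= 0.
Proof.
move=> H zle.
have cu : cvgn u by apply/cvg_ex; exists 0.
have h : z <= limn u by apply: limr_ge => //; exact: nearW.
by rewrite (cvg_lim _ H) in h.
Qed.
End LimAux.
Import LimAux.

Definition S0z N a := fun g : nat -> letter => (N = 0%N \/ g N != g N.-1) /\ g N = a.

Lemma Z_null (R : realType) dsp (T : measurableType dsp)
  (P : probability T R) (q : letter -> nat -> letter -> R) (X : nat -> T -> letter) :
  (forall a k b, (0 < k)%N -> 0 <= q a k b) ->
  (forall n a, measurable [set w | X n w = a]) ->
  (forall w, X 0%N w = ld) -> trans_hyp P q X ->
  (forall a, (fun n : nat => \prod_(1 <= k < n.+1) q a k a) @ \oo --> 0) ->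
  forall N a, measurable (\bigcap_i runE X N a (S0z N a) i) /\
    P (\bigcap_i runE X N a (S0z N a) i) = 0%E.
Proof.
move=> q0 Hm HX0 HT Hlim N a.
have ext : forall g g', (forall i, (i <= N)%N -> g i = g' i) -> S0z N a g -> S0z N a g'.
  move=> g g' E [H1 H2]; split; last by rewrite -E.
  by rewrite -!E ?leq_pred.
have H0 : forall g, S0z N a g -> g 0%N = ld -> (N = 0%N \/ g N != g N.-1) /\ g N = a.
  by move=> g [].
have RL := run_lemma Hm HX0 HT ext H0.
set Z := \bigcap_i _.
have mZ : measurable Z by apply: bigcapT_measurable => i; case: (RL i).
split => //.
have E0 : runE X N a (S0z N a) 0 = [set w | S0z N a (fun l => X l w)].
  apply/seteqP; split => w /=; first by case.
  by move=> [H1 H2]; split => // l; rewrite leqn0 => /eqP ->; rewrite addn0.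
have mS : measurable [set w | S0z N a (fun l => X l w)].
  by rewrite -E0; case: (RL 0%N).
set u := fun n : nat => \prod_(1 <= k < n.+1) q a k a.
have u0 : forall i, 0 <= u i.
  move=> i; rewrite /u big_nat_cond; apply: prodr_ge0 => l /andP[/andP[l1 _] _].
  exact: q0.
have PZ : forall i, (P Z <= (u i)%:E)%E.
  move=> i; have [mi ei _] := RL i.
  apply: (@le_trans _ _ (P (runE X N a (S0z N a) i))).
    by apply: le_measure; rewrite ?inE //; exact: bigcap_inf.
  rewrite ei -[leRHS]mule1; apply: lee_pmul => //.
  - by rewrite lee_fin; exact: u0.
  - exact: probability_le1.
have fin : P Z \is a fin_num by exact: fin_num_measure.
rewrite -(fineK fin); congr (_%:E).
apply/eqP; rewrite eq_le; apply/andP; split; last first.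
  by rewrite fine_ge0 // measure_ge0.
have zle : forall i, fine (P Z) <= u i by move=> i; rewrite -lee_fin fineK.
exact: (lim0_le (Hlim a) zle).
Qed.


Unset Implicit Arguments.
Set Strict Implicit.

Theorem mainTheorem1 (R : realType) (dsp : measure_display)
  (T : measurableType dsp) (P : probability T R)
  (q : letter -> nat -> letter -> R) (X : nat -> T -> letter) :
  (* q_{alpha^k beta} is a probability measure on A for every context *)
  (forall a k b, (0 < k)%N -> 0 <= q a k b) ->
  (forall a k, (0 < k)%N -> q a k lu + q a k ld = 1) ->
  (* the X_n are random variables *)
  (forall n a, measurable [set w | X n w = a]) ->
  (* initial word: X_{-1} = u (built into ext_hist), X_0 = d *)
  (forall w, X 0%N w = ld) ->
  (* VLMC transitions: P(U_{n+1} = b U_n | U_n) = q_{pref(U_n)}(b) *)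
  (forall (n : nat) (h : nat -> letter), h 0%N = ld ->
     P [set w | forall i, (i <= n.+1)%N -> X i w = h i] =
     ((q (h n) (ctx_len h n) (h n.+1))%:E *
      P [set w | forall i, (i <= n)%N -> X i w = h i])%E) ->
  (* non-degeneracy assumption *)
  (forall a, (fun n : nat => \prod_(1 <= k < n.+1) q a k a) @ \oo --> 0) ->
  (* conclusions *)
  ({ae P, forall w, forall n, exists m, jump_time (fun i => X i w) n m}
   /\
   (forall (n : nat) (j : nat -> letter) (t : nat -> nat),
      P [set w | MR_event (fun i => X i w) n.+1 j t] =
      ((smkernel q (j n) (j n.+1) (t n.+1))%:E *
       P [set w | MR_event (fun i => X i w) n j t])%E)
   /\
   (forall w (n m m' i : nat),
      jump_time (fun l => X l w) n m ->
      jump_time (fun l => X l w) n.+1 m' ->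
      (m <= i < m')%N -> X i w = X m w)).
Proof.
move=> q0 qsum Hm HX0 HT Hlim.
have HT' : trans_hyp P q X by exact: HT.
split; [|split]; last first.
- by move=> w n m m' i J J' hi; exact: jt_const J J' hi.
- exact: part2.
pose Z N a := \bigcap_i runE X N a (S0z N a) i.
pose A := \bigcup_N (Z N true `|` Z N false).
have nA : P.-negligible A.
  apply: negligible_bigcup => N; apply: negligibleU.
    by have [mZ PZ] := Z_null q0 Hm HX0 HT' Hlim N true; exists (Z N true); split.
  by have [mZ PZ] := Z_null q0 Hm HX0 HT' Hlim N false; exists (Z N false); split.
apply: (negligibleS _ nA).
move=> w /= nH; apply: contrapT => nAw; apply: nH => n.
elim: n => [|n [m J]]; first by exists 0%N.
case: (pselect (exists m', (m < m')%N && (X m' w != X m'.-1 w))) => [ex|nex].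
  case: (ex_minnP ex) => m' /andP[h1 h2] hmin; exists m'.
  apply/(jt_succ _ J); split => // k /andP[k1 k2].
  apply/eqP/negPn/negP => hk; have := hmin k; rewrite k1 hk => /(_ isT).
  by rewrite leqNgt k2.
exfalso; apply: nAw; exists m => //.
have Zm : Z m (X m w) w.
  move=> i _ /=; split; first by split => //; exact: jt_start J.
  elim => [|l IHl] hl; first by rewrite addn0.
  have e : X (m + l).+1 w = X (m + l).+1.-1 w.
    apply/eqP/negPn/negP => hne; apply: nex; exists (m + l).+1.
    by rewrite hne ltnS leq_addr.
  by rewrite addnS e /= IHl // ltnW.
by case: (X m w) Zm => Zm; [left|right].
Qed.
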